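(* Let ${\cal K}$ be a closed simplicial complex of dimension $n\ge 3$ with skeleton $G$. (i) If ${\cal K}$ has an $(n-2)$-face $F$ that belongs to at least five $n$-faces and whose link is a single cycle which is an isometric subgraph of $G$ (distances in the cycle equal distances in $G$), then $G$ is not embeddable up to any scale into a hypercube. (ii) If ${\cal K}$ is strongly connected and of type $\{3,4\}$, then $G$ is embeddable up to some scale into a hypercube.
   Context: An (abstract) simplicial complex of dimension $n$ is a family of finite nonempty sets closed under taking nonempty subsets and under nonempty intersections, whose maximal members ($n$-faces) all have cardinality $n+1$. It is closed if every $(n-1)$-face lies in exactly two $n$-faces, and strongly connected if any two $n$-faces can be joined by a sequence of $n$-faces in which consecutive ones share an $(n-1)$-face. For an $(n-2)$-face $F$, every $n$-face $F'\supseteq F$ is $F\cup e$ for a unique $2$-set $e$; the link of $F$ is the graph formed by these edges $e$. The complex is of type $\{3,4\}$ if every $(n-2)$-face lies in exactly $3$ or $4$ $n$-faces. The skeleton is the graph on the vertices with adjacency given by $1$-faces. A connected graph $G$ with path metric $d_G$ is embeddable up to scale $\lambda$ into a hypercube if there is a map $\phi:V(G)\to\{0,1\}^N$ with Hamming distance $|\phi(i)-\phi(j)|=\lambda\, d_G(i,j)$ for all vertices $i,j$. *)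

(* Defs.v *)
From mathcomp Require Import all_boot.
Set Implicit Arguments. Unset Strict Implicit. Unset Printing Implicit Defensive.

Section Complexes.
Variable T : finType.

Definition is_complex (n : nat) (K : {set {set T}}) : Prop :=
  [/\ K != set0,
      set0 \notin K,
      forall A B : {set T}, A \in K -> B \subset A -> B != set0 -> B \in K,
      forall A B : {set T}, A \in K -> B \in K -> A :&: B != set0 -> A :&: B \in K
    & forall A : {set T}, A \in K -> (forall B : {set T}, B \in K -> A \subset B -> B = A) ->
        #|A| = n.+1].

Definition kfaces (K : {set {set T}}) (k : nat) : {set {set T}} :=
  [set A in K | #|A| == k.+1].

Definition star (K : {set {set T}}) (n : nat) (F : {set T}) : {set {set T}} :=
  [set A in kfaces K n | F \subset A].

Definition closed_complex (n : nat) (K : {set {set T}}) : Prop :=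
  forall F : {set T}, F \in kfaces K n.-1 -> #|star K n F| = 2.

(* strongly connected: n-faces joined by chains of n-faces, consecutive ones
   sharing an (n-1)-face (i.e. having at least n common vertices) *)
Definition facet_adj (n : nat) (K : {set {set T}}) : rel {set T} :=
  fun A B => [&& A \in kfaces K n, B \in kfaces K n & n <= #|A :&: B|].

Definition strongly_connected (n : nat) (K : {set {set T}}) : Prop :=
  forall A B : {set T}, A \in kfaces K n -> B \in kfaces K n ->
    connect (facet_adj n K) A B.

Definition type34 (n : nat) (K : {set {set T}}) : Prop :=
  forall F : {set T}, F \in kfaces K (n - 2) -> #|star K n F| = 3 \/ #|star K n F| = 4.

Definition vertex (K : {set {set T}}) (x : T) : bool := [set x] \in K.

Definition skel (K : {set {set T}}) : rel T :=
  fun x y => (x != y) && ([set x; y] \in K).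

Definition link (n : nat) (K : {set {set T}}) (F : {set T}) : rel T :=
  fun x y => [&& x != y, x \notin F, y \notin F & F :|: [set x; y] \in kfaces K n].

Definition is_dist (e : rel T) (x y : T) (k : nat) : Prop :=
  (exists2 p : seq T, path e x p & (last x p == y) && (size p == k)) /\
  (forall p : seq T, path e x p -> last x p = y -> k <= size p).

Definition is_cycle_graph (e : rel T) (c : seq T) : Prop :=
  [/\ uniq c, 3 <= size c &
      forall x y, e x y = (x \in c) && ((y == next c x) || (x == next c y))].

Definition isometric_in_skel (K : {set {set T}}) (e : rel T) (c : seq T) : Prop :=
  forall x y k, x \in c -> y \in c -> is_dist e x y k -> is_dist (skel K) x y k.

Definition skel_connected (K : {set {set T}}) : Prop :=
  forall x y, vertex K x -> vertex K y -> connect (skel K) x y.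

Definition hamming (N : nat) (u v : {ffun 'I_N -> bool}) : nat :=
  #|[set i | u i != v i]|.

Definition embeddable (K : {set {set T}}) (lam : nat) : Prop :=
  skel_connected K /\
  exists (N : nat) (phi : T -> {ffun 'I_N -> bool}),
    forall x y k, vertex K x -> vertex K y -> is_dist (skel K) x y k ->
      hamming (phi x) (phi y) = lam * k.

End Complexes.

(* Main.v *)
Require Import Defs.
From mathcomp Require Import all_boot zify.
Set Implicit Arguments. Unset Strict Implicit. Unset Printing Implicit Defensive.

Section Basics.
Variables (T : finType) (n : nat) (K : {set {set T}}).
Hypothesis n1 : 1 <= n.
Hypothesis cK : is_complex n K.
Hypothesis clK : closed_complex n K.

Lemma subK (A B : {set T}) : A \in K -> B \subset A -> B != set0 -> B \in K.
Proof. by case: cK => _ _ H _ _; apply: H. Qed.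

Lemma facet_ex (A : {set T}) : A \in K -> exists2 B, B \in kfaces K n & A \subset B.
Proof.
move=> AK.
have P0 : (A \in K) && (A \subset A) by rewrite AK subxx.
case: (@arg_maxnP _ A (fun B : {set T} => (B \in K) && (A \subset B)) (fun B : {set T} => #|B|) P0) => B /andP [BK AB] Bmax.
exists B => //; rewrite inE BK /=.
case: cK => _ _ _ _ H; rewrite (H B BK) //.
move=> C CK BC; have := Bmax C; rewrite CK (subset_trans AB BC) => /(_ isT) le.
have [_ eqBC] := subset_leqif_cards BC.
by apply/esym/eqP; rewrite -eqBC eqn_leq (subset_leq_card BC); exact: le.
Qed.

Lemma one_extra (X C : {set T}) x y : X \subset C -> #|C| = #|X|.+1 ->
  x \notin X -> x \in C -> y \notin X -> y \in C -> x = y.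
Proof.
move=> XC cC xX xC yX yC.
have sub : x |: X \subset C by rewrite subUset sub1set xC XC.
have [_ eqc] := subset_leqif_cards sub.
have e : x |: X = C by apply/eqP; rewrite -eqc cardsU1 xX cC.
by move: yC; rewrite -e in_setU1 (negbTE yX) orbF => /eqP.
Qed.

Lemma closed_other (X P : {set T}) : X \in K -> #|X| = n -> P \in kfaces K n ->
  X \subset P -> exists2 Q, Q \in kfaces K n & (X \subset Q) && (Q != P).
Proof.
move=> XK cX PF XP.
have Xf : X \in kfaces K n.-1 by rewrite inE XK cX prednK ?eqxx.
have PS : P \in star K n X by rewrite inE PF XP.
have := clK Xf; rewrite (cardsD1 P) PS add1n => /eqP; rewrite eqSS => /cards1P [Q eQ].
have : Q \in star K n X :\ P by rewrite eQ set11.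
rewrite !inE => /and3P [QP /andP[QK cQ] XQ].
by exists Q; rewrite ?inE ?QK ?cQ // XQ QP.
Qed.

Lemma closed3 (X P Q R : {set T}) : X \in K -> #|X| = n ->
  P \in kfaces K n -> Q \in kfaces K n -> R \in kfaces K n ->
  X \subset P -> X \subset Q -> X \subset R -> P != Q -> P != R -> Q != R -> False.
Proof.
move=> XK cX PF QF RF XP XQ XR PQ PR QR.
have Xf : X \in kfaces K n.-1 by rewrite inE XK cX prednK ?eqxx.
have := clK Xf; rewrite (cardsD1 P) (cardsD1 Q (_ :\ P)) (cardsD1 R (_ :\ Q)).
have PS : P \in star K n X by rewrite inE PF XP.
have QS : Q \in star K n X by rewrite inE QF XQ.
have RS : R \in star K n X by rewrite inE RF XR.
by rewrite !in_setD1 PS QS RS eq_sym PQ eq_sym QR eq_sym PR.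
Qed.

End Basics.


Section Half.
Variable T : finType.

Definition flipa (a : T) (f : {ffun T -> bool}) : {ffun T -> bool} :=
  [ffun x => if x == a then ~~ f x else f x].

Lemma flipaK a : involutive (flipa a).
Proof. by move=> f; apply/ffunP => x; rewrite !ffunE; case: eqP => // _; rewrite negbK. Qed.

Lemma half_card (a b : T) c : a != b ->
  #|[set f : {ffun T -> bool} | (f a (+) f b) == c]| * 2 = 2 ^ #|T|.
Proof.
move=> ab; have ba : b != a by rewrite eq_sym.
set S := [set f : {ffun T -> bool} | (f a (+) f b) == c].
have eS : flipa a @: S = ~: S.
  apply/setP => f; rewrite !inE; apply/imsetP/idP.
    case=> g; rewrite inE => /eqP <- ->; rewrite !ffunE eqxx (negbTE ba) //.
    by case: (g a); case: (g b).
  move=> h; exists (flipa a f); last by rewrite flipaK.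
  rewrite inE !ffunE eqxx (negbTE ba); move: h.
  by case: (f a); case: (f b); case: (c : bool).
have := cardsC S; rewrite -eS (card_imset _ (can_inj (flipaK a))) card_ffun card_bool.
by rewrite muln2 -addnn.
Qed.


Definition NN := #|{ffun T -> bool}|.

Lemma card_enum (P : pred {ffun T -> bool}) :
  #|[set i : 'I_NN | P (enum_val i)]| = #|[set f | P f]|.
Proof.
rewrite -(card_imset _ enum_val_inj); apply: eq_card => f; rewrite inE.
apply/imsetP/idP => [[i]|Pf]; first by rewrite inE => Pi ->.
by exists (enum_rank f); rewrite ?inE enum_rankK.
Qed.

End Half.


Section Inv.
Variables (T : finType) (n : nat) (K : {set {set T}}).
Hypothesis n3 : 3 <= n.
Hypothesis cK : is_complex n K.
Hypothesis clK : closed_complex n K.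
Hypothesis t34 : type34 n K.
Hypothesis sc : strongly_connected n K.

Let n1 : 1 <= n. Proof. by apply: leq_trans n3. Qed.

Lemma neq_mem (P Q : {set T}) x : x \in P -> x \notin Q -> P != Q.
Proof. by move=> xP xQ; apply/eqP => e; move: xQ; rewrite -e xP. Qed.

Lemma nonempty (X : {set T}) : 0 < #|X| -> X != set0.
Proof. by rewrite card_gt0. Qed.

Lemma facet_card (A : {set T}) : A \in kfaces K n -> #|A| = n.+1.
Proof. by rewrite inE => /andP [_ /eqP]. Qed.

Lemma facet_K (A : {set T}) : A \in kfaces K n -> A \in K.
Proof. by rewrite inE => /andP []. Qed.

Lemma adj_decomp (A B : {set T}) : A \in kfaces K n -> B \in kfaces K n ->
  n <= #|A :&: B| -> A != B ->
  exists a b, [/\ a \in A, a \notin B, b \in B, b \notin A & (A :\ a \subset B) && (B :\ b \subset A)].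
Proof.
move=> AF BF cAB AB.
have cA := facet_card AF; have cB := facet_card BF.
have cI : #|A :&: B| = n.
  apply/eqP; rewrite eqn_leq cAB andbT.
  case: (ltngtP #|A :&: B| n) => // h.
  have l1 := subset_leq_card (subsetIl A B).
  have [_ e1] := subset_leqif_cards (subsetIl A B).
  have [_ e2] := subset_leqif_cards (subsetIr A B).
  have E1 : A :&: B = A by apply/eqP; rewrite -e1 cA; apply/eqP; lia.
  have E2 : A :&: B = B by apply/eqP; rewrite -e2 cB; apply/eqP; lia.
  by move: AB; rewrite -E1 E2 eqxx.
have h1 := cardsID B A; have h2 := cardsID A B.
rewrite cI cA in h1; rewrite setIC cI cB in h2.
have /cards1P [a ea] : #|A :\: B| == 1 by apply/eqP; lia.
have /cards1P [b eb] : #|B :\: A| == 1 by apply/eqP; lia.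
have : a \in A :\: B by rewrite ea set11.
have : b \in B :\: A by rewrite eb set11.
rewrite !inE => /andP [bA bB] /andP [aB aA].
exists a, b; split => //; apply/andP; split.
- apply/subsetP => x; rewrite !inE => /andP [xa xA].
  apply: contraTT xa => xB; rewrite negbK; apply/eqP/set1P; rewrite -ea !inE xB xA.
  done.
- apply/subsetP => x; rewrite !inE => /andP [xb xB].
  apply: contraTT xb => xA; rewrite negbK; apply/eqP/set1P; rewrite -eb !inE xB xA.
  done.
Qed.


Lemma five (S : {set {set T}}) a b c d e : a \in S -> b \in S -> c \in S -> d \in S -> e \in S ->
  uniq [:: a; b; c; d; e] -> 5 <= #|S|.
Proof.
move=> aS bS cS dS eS U; rewrite cardE.
have -> : 5 = size [:: a; b; c; d; e] by [].
apply: (uniq_leq_size U) => x; rewrite mem_enum !in_cons in_nil orbF.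
by case/orP => [/eqP->//|]; case/orP => [/eqP->//|]; case/orP => [/eqP->//|];
  case/orP => /eqP->.
Qed.

Lemma skelC x y : skel K x y = skel K y x.
Proof. by rewrite /skel eq_sym setUC. Qed.

Lemma skel_of (C : {set T}) x y : x != y -> x \in C -> y \in C -> C \in K -> skel K x y.
Proof.
move=> xy xC yC CK; rewrite /skel xy /=; apply: (subK cK CK).
  by rewrite subUset !sub1set xC yC.
by apply/set0Pn; exists x; rewrite !inE eqxx.
Qed.

Definition Inv v (A : {set T}) := v \in A \/
  exists a C, [/\ a \in A, C \in kfaces K n, v \in C & A :\ a \subset C].

Lemma inv_step v (A B : {set T}) : A \in kfaces K n -> B \in kfaces K n ->
  n <= #|A :&: B| -> Inv v A -> Inv v B.
Proof.
move=> AF BF cAB IA; case: (eqVneq A B) => [<- // | AB].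
have [a [b [aA aB bB bA /andP [AaB BbA]]]] := adj_decomp AF BF cAB AB.
case: (boolP (v \in B)) => vB; first by left.
right.
have cA := facet_card AF; have cB := facet_card BF.
case: (boolP (v \in A)) => vA.
  have va : v = a.
    apply/eqP; apply: contraNT vB => va; apply: (subsetP AaB).
    by rewrite !inE va vA.
  by exists b, A; split.
case: IA => [vA'| [a0 [C [a0A CF vC AC]]]]; first by rewrite vA' in vA.
have cC := facet_card CF.
have AK := facet_K AF.
case: (eqVneq a a0) => [ea | aa0].
  subst a0; exfalso.
  have cX : #|A :\ a| = n by move: cA; rewrite (cardsD1 a) aA => -[].
  apply: (closed3 n1 clK _ cX AF BF CF (subD1set A a) AaB AC).
  - apply: (subK cK AK (subD1set A a)); apply: nonempty; clear -cX n3; lia.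
  - exact: neq_mem aA aB.
  - by rewrite eq_sym; apply: neq_mem vC vA.
  - by rewrite eq_sym; apply: neq_mem vC vB.
set E := A :\ a :\ a0.
have cAa : #|A :\ a| = n by move: cA; rewrite (cardsD1 a) aA => -[].
have a0Aa : a0 \in A :\ a by rewrite !inE eq_sym aa0 a0A.
have cE : #|E| = n.-1 by move: cAa; rewrite (cardsD1 a0) a0Aa /E; clear; lia.
have EA : E \subset A by apply: subset_trans (subD1set _ _) (subD1set _ _).
have EB : E \subset B by apply: subset_trans (subD1set _ _) AaB.
have EC : E \subset C.
  apply/subsetP => x; rewrite !inE => /and3P [xa0 xa xA].
  by apply: (subsetP AC); rewrite !inE xa0 xA.
have a0B : a0 \in B by apply: (subsetP AaB).
have cAa0 : #|A :\ a0| = n by move: cA; rewrite (cardsD1 a0) a0A => -[].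
have bC : b \notin C.
  apply/negP => bC.
  have vb : v = b.
    apply: (one_extra AC) => //; first by rewrite cC cAa0.
    - by rewrite !inE (negbTE vA) andbF.
    - by rewrite !inE (negbTE bA) andbF.
  by move: vB; rewrite vb bB.
have bE : b \notin E by apply: contra bA; apply: (subsetP EA).
have vE : v \notin E by apply: contra vA; apply: (subsetP EA).
have EK : E \in K by apply: (subK cK AK EA); apply: nonempty; clear -cE n3; lia.
have BK := facet_K BF; have CK := facet_K CF.
have XbB : b |: E \subset B by rewrite subUset sub1set bB EB.
have XvC : v |: E \subset C by rewrite subUset sub1set vC EC.
have cXb : #|b |: E| = n by rewrite cardsU1 bE cE; clear -n3; lia.
have cXv : #|v |: E| = n by rewrite cardsU1 vE cE; clear -n3; lia.
have XbK : b |: E \in K by apply: (subK cK BK XbB); apply: nonempty; clear -cXb n3; lia.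
have XvK : v |: E \in K by apply: (subK cK CK XvC); apply: nonempty; clear -cXv n3; lia.
have [D DF /andP [XbD DB]] := closed_other n1 clK XbK cXb BF XbB.
have [D' D'F /andP [XvD' D'C]] := closed_other n1 clK XvK cXv CF XvC.
have bD : b \in D by apply: (subsetP XbD); rewrite !inE eqxx.
have vD' : v \in D' by apply: (subsetP XvD'); rewrite !inE eqxx.
have ED : E \subset D by apply: subset_trans XbD; apply: subsetUr.
have ED' : E \subset D' by apply: subset_trans XvD'; apply: subsetUr.
case: (eqVneq D D') => [eD | DD'].
  subst D'; exists a0, D; split => //.
  apply/subsetP => x; rewrite !inE => /andP [xa0 xB].
  case: (eqVneq x b) => [-> // | xb].
  apply: (subsetP ED); rewrite !inE xa0 /=.
  have xA : x \in A by apply: (subsetP BbA); rewrite !inE xb xB.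
  rewrite xA andbT; apply: contraTneq xB => ->; exact: aB.
exfalso.
have E34 : E \in kfaces K (n - 2) by rewrite inE EK cE; apply/eqP; clear -n3; lia.
have := t34 E34 => h.
have : 5 <= #|star K n E|.
  apply: (@five _ A B C D D');
    [by rewrite inE AF EA|by rewrite inE BF EB|by rewrite inE CF EC|by rewrite inE DF ED|
     by rewrite inE D'F ED'|].
  rewrite /= !inE !negb_or.
  have nAC : A != C by rewrite eq_sym (neq_mem vC vA).
  have nBC : B != C by rewrite eq_sym (neq_mem vC vB).
  rewrite (neq_mem aA aB) ![A == _]eq_sym ![B == _]eq_sym ![C == _]eq_sym.
  by rewrite nAC nBC (neq_mem vD' vA) (neq_mem vD' vB) (neq_mem bD bA) (neq_mem bD bC) DB D'C DD'.
by case: h => ->.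
Qed.

Lemma vertex_facet x : vertex K x -> exists2 A, A \in kfaces K n & x \in A.
Proof.
move=> vx; have [A AF xA] := facet_ex cK vx.
by exists A => //; rewrite -sub1set.
Qed.

Lemma mem_vertex (A : {set T}) x : A \in K -> x \in A -> vertex K x.
Proof.
move=> AK xA; apply: (subK cK AK); first by rewrite sub1set.
by apply/set0Pn; exists x; rewrite inE.
Qed.

Lemma inv_all v (A0 A : {set T}) : A0 \in kfaces K n -> v \in A0 ->
  A \in kfaces K n -> Inv v A.
Proof.
move=> A0F vA0 AF; have := sc A0F AF; case/connectP => p pth ->.
have : Inv v A0 by left.
elim: p A0 A0F {vA0} pth => [|Y p IH] X XF; first by move=> _.
move=> /= /andP [adj pth] IX.
move: adj; rewrite /facet_adj => /and3P [_ YF cXY].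
by apply: (IH Y YF pth); apply: (inv_step XF YF cXY IX).
Qed.

Lemma nonadj v u (A : {set T}) : vertex K v -> A \in kfaces K n -> u \in A ->
  ~~ skel K u v -> u != v ->
  exists2 C, C \in kfaces K n & (v \in C) && (A :\ u \subset C).
Proof.
move=> vv AF uA nuv uv.
have [A0 A0F vA0] := vertex_facet vv.
case: (inv_all A0F vA0 AF) => [vA | [a0 [C [a0A CF vC AC]]]].
  by move: nuv; rewrite (skel_of uv uA vA (facet_K AF)).
case: (eqVneq a0 u) => [ea | a0u].
  by subst a0; exists C => //; rewrite vC AC.
have uC : u \in C by apply: (subsetP AC); rewrite !inE eq_sym a0u uA.
by move: nuv; rewrite (skel_of uv uC vC (facet_K CF)).
Qed.

Lemma antipode_uniq v u1 u2 : vertex K v -> vertex K u1 -> vertex K u2 ->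
  u1 != v -> u2 != v -> ~~ skel K u1 v -> ~~ skel K u2 v -> u1 = u2.
Proof.
move=> vv vu1 vu2 u1v u2v n1v n2v.
case: (eqVneq u1 u2) => // u12; exfalso.
have [A1 A1F u1A1] := vertex_facet vu1.
have [C1 C1F /andP [vC1 AC1]] := nonadj vv A1F u1A1 n1v u1v.
have nvu2 : ~~ skel K v u2 by rewrite skelC.
have vu2n : v != u2 by rewrite eq_sym.
have [D DF /andP [u2D CD]] := nonadj vu2 C1F vC1 nvu2 vu2n.
have vA1 : v \notin A1.
  by apply: contra n1v => vA1; apply: (skel_of u1v u1A1 vA1 (facet_K A1F)).
have u2A1 : u2 \notin A1.
  apply: contra n2v => u2A1.
  have : u2 \in C1 by apply: (subsetP AC1); rewrite !inE eq_sym u12 u2A1.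
  by move=> u2C1; apply: (skel_of u2v u2C1 vC1 (facet_K C1F)).
have vD : v \notin D.
  by apply: contra n2v => vD; apply: (skel_of u2v u2D vD (facet_K DF)).
have cA1 := facet_card A1F.
have cX : #|A1 :\ u1| = n by move: cA1; rewrite (cardsD1 u1) u1A1 => -[].
have XK : A1 :\ u1 \in K.
  apply: (subK cK (facet_K A1F) (subD1set A1 u1)); apply: nonempty.
  by rewrite cX; apply: leq_trans n3.
have XD : A1 :\ u1 \subset D.
  apply/subsetP => x xX; apply: (subsetP CD); rewrite !inE (subsetP AC1 x xX) andbT.
  by apply: contraNneq vA1 => <-; move: xX; rewrite !inE => /andP [].
apply: (closed3 n1 clK XK cX A1F C1F DF (subD1set A1 u1) AC1 XD).
- by rewrite eq_sym (neq_mem vC1 vA1).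
- by rewrite eq_sym (neq_mem u2D u2A1).
- exact: neq_mem vC1 vD.
Qed.

Definition ant x y := [&& vertex K x, vertex K y, x != y & ~~ skel K x y].

Lemma antC x y : ant x y = ant y x.
Proof. by rewrite /ant skelC eq_sym; case: (vertex K x); case: (vertex K y). Qed.

Lemma ant_uniq x y z : ant x y -> ant x z -> y = z.
Proof.
case/and4P => vx vy xy sxy /and4P [_ vz xz sxz].
apply: (antipode_uniq vx vy vz); rewrite 1?eq_sym // skelC //.
Qed.

Lemma skel_vertex x y : skel K x y -> vertex K x.
Proof.
case/andP => _ h; apply: (mem_vertex h); rewrite !inE eqxx //.
Qed.

Lemma common_nb x y : vertex K x -> vertex K y -> x != y -> ~~ skel K x y ->
  exists z, skel K x z && skel K z y.
Proof.
move=> vx vy xy sxy.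
have [A AF xA] := vertex_facet vx.
have cA := facet_card AF.
have : 0 < #|A :\ x :\ y|.
  move: cA; rewrite (cardsD1 x) (cardsD1 y (A :\ x)) xA.
  case: (y \in A :\ x) => /=; clear -n3; lia.
case/card_gt0P => z; rewrite !inE => /and3P [zy zx zA].
exists z.
have sxz : skel K x z by apply: (skel_of _ xA zA (facet_K AF)); rewrite eq_sym.
rewrite sxz /=; apply/negPn/negP => szy.
have vz : vertex K z by apply: (mem_vertex (facet_K AF) zA).
have := antipode_uniq vy vx vz xy zy sxy szy.
by move=> e; move: zx; rewrite e eqxx.
Qed.

Lemma dist_refl x k : is_dist (skel K) x x k -> k = 0.
Proof. by case=> _ h; have := h [::] isT erefl; rewrite leqn0 => /eqP. Qed.

Lemma dist_adj x y k : skel K x y -> is_dist (skel K) x y k -> k = 1.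
Proof.
move=> sxy [[p pth /andP [/eqP lp /eqP sp]] h].
have := h [:: y]; rewrite /= sxy => /(_ isT erefl) k1.
case: p pth lp sp => [|w p] /=.
  by move=> _ exy; move: sxy; rewrite exy /skel eqxx.
by move=> _ _ e; clear -e k1; lia.
Qed.

Lemma dist_ant x y k : ant x y -> is_dist (skel K) x y k -> k = 2.
Proof.
move=> axy; have := axy; case/and4P => vx vy xy sxy.
have [z /andP [sxz szy]] := common_nb vx vy xy sxy.
move=> [[p pth /andP [/eqP lp /eqP sp]] h].
have := h [:: z; y]; rewrite /= sxz szy => /(_ isT erefl) k2.
case: p pth lp sp => [|w p] /=.
  by move=> _ exy; move: xy; rewrite exy eqxx.
case: p => [|w' p] /=.
  by move=> /andP [sxw _] ewy; move: sxy; rewrite -ewy sxw.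
by move=> _ _ e; clear -e k2; lia.
Qed.

Definition part x := [pick y | ant x y].
Definition rep x := if part x is Some y then
  (if (enum_rank y < enum_rank x)%N then y else x) else x.
Definition flip x := rep x != x.
Definition bit x (f : {ffun T -> bool}) := f (rep x) (+) flip x.

Lemma rep_cases x : rep x = x \/ ant x (rep x).
Proof.
rewrite /rep /part; case: pickP => [y axy | _]; last by left.
by case: ifP => _; [right | left].
Qed.

Lemma part_ant x y : ant x y -> part x = Some y.
Proof.
move=> axy; rewrite /part; case: pickP => [z axz | h].
  by rewrite (ant_uniq axz axy).
by move: (h y); rewrite axy.
Qed.

Lemma ant_rep x y : ant x y -> rep x = rep y /\ flip x != flip y.
Proof.
move=> axy; have ayx : ant y x by rewrite antC.
have xy : x != y by case/and4P: axy.
rewrite /flip /rep (part_ant axy) (part_ant ayx).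
have rxy : enum_rank x != enum_rank y.
  by apply: contra xy => /eqP /enum_rank_inj ->.
case: (ltngtP (enum_rank y) (enum_rank x)) => [h|h|/val_inj h].
- by split=> //; rewrite eqxx [y == x]eq_sym xy.
- by split=> //; rewrite eqxx xy.
- by move: rxy; rewrite h eqxx.
Qed.

Lemma rep_skel x y : skel K x y -> rep x != rep y.
Proof.
move=> sxy; have xy : x != y by case/andP: sxy.
have nxy : ~~ ant x y by rewrite /ant sxy !andbF.
apply/eqP => e.
case: (rep_cases x) => [ex | ax]; case: (rep_cases y) => [ey | ay].
- by move: xy; rewrite -ex e ey eqxx.
- by move: ay; rewrite -e ex antC (negbTE nxy).
- by move: ax; rewrite e ey (negbTE nxy).
- rewrite e antC in ax; rewrite antC in ay.
  by move: xy; rewrite (ant_uniq ax ay) eqxx.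
Qed.

Lemma part2 : exists2 lam, 0 < lam & embeddable K lam.
Proof.
exists (2 ^ #|T|.-1); first by rewrite expn_gt0.
split.
  move=> x y vx vy; case: (eqVneq x y) => [-> //| xy].
  case: (boolP (skel K x y)) => sxy; first exact: connect1.
  have [z /andP [sxz szy]] := common_nb vx vy xy sxy.
  exact: connect_trans (connect1 sxz) (connect1 szy).
exists (NN T), (fun x => [ffun i => bit x (enum_val i)]).
move=> x y k vx vy d; rewrite /hamming.
have -> : [set i | [ffun i => bit x (enum_val i)] i != [ffun i => bit y (enum_val i)] i]
   = [set i : 'I_(NN T) | bit x (enum_val i) != bit y (enum_val i)].
  by apply/setP => i; rewrite !inE !ffunE.
rewrite (card_enum (fun f => bit x f != bit y f)).
have T0 : 0 < #|T| by apply/card_gt0P; exists x.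
have e2 : 2 ^ #|T| = 2 ^ #|T|.-1 * 2 by rewrite -expnSr prednK.
case: (eqVneq x y) => [exy | xy].
  subst y; rewrite (dist_refl d) muln0; apply: eq_card0 => f; by rewrite inE eqxx.
case: (boolP (skel K x y)) => sxy.
  rewrite (dist_adj sxy d) muln1.
  have rxy := rep_skel sxy.
  have := half_card (~~ (flip x (+) flip y)) rxy.
  have -> : #|[set f : {ffun T -> bool} | f (rep x) (+) f (rep y) == ~~ (flip x (+) flip y)]|
         = #|[set f | bit x f != bit y f]|.
    apply: eq_card => f; rewrite !inE /bit.
    by case: (f (rep x)); case: (f (rep y)); case: (flip x); case: (flip y).
  rewrite e2 => h; clear -h; lia.
have axy : ant x y by rewrite /ant vx vy xy sxy.
rewrite (dist_ant axy d).
have [erep fl] := ant_rep axy.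
have -> : [set f : {ffun T -> bool} | bit x f != bit y f] = setT.
  apply/setP => f; rewrite !inE /bit erep; move: fl.
  by case: (f (rep y)); case: (flip x); case: (flip y).
by rewrite cardsT card_ffun card_bool e2 mulnC.
Qed.

End Inv.


Lemma ineq7 (a1 a2 b0 b1 b2 b3 b4 : bool) :
  (a1 != a2) + ((b0 != b2) + (b1 != b3) + (b2 != b4) + (b3 != b0) + (b4 != b1)) <=
  (a1 != b0) + (a1 != b1) + (a1 != b2) + (a1 != b3) + (a1 != b4) +
  (a2 != b0) + (a2 != b1) + (a2 != b2) + (a2 != b3) + (a2 != b4).
Proof.
by case: a1; case: a2; case: b0; case: b1; case: b2; case: b3; case: b4.
Qed.

Lemma hammingE N (u v : {ffun 'I_N -> bool}) : hamming u v = \sum_(i < N) (u i != v i).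
Proof.
rewrite /hamming -sum1_card big_mkcond /=; apply: eq_bigr => i _.
by rewrite inE; case: (u i != v i).
Qed.

Lemma hineq N (p1 p2 q0 q1 q2 q3 q4 : {ffun 'I_N -> bool}) :
  hamming p1 p2 + (hamming q0 q2 + hamming q1 q3 + hamming q2 q4 + hamming q3 q0 + hamming q4 q1)
  <= hamming p1 q0 + hamming p1 q1 + hamming p1 q2 + hamming p1 q3 + hamming p1 q4 +
     hamming p2 q0 + hamming p2 q1 + hamming p2 q2 + hamming p2 q3 + hamming p2 q4.
Proof.
rewrite !hammingE -!big_split /=; apply: leq_sum => i _; exact: ineq7.
Qed.

Section Part1.
Variables (T : finType) (n : nat) (K : {set {set T}}).
Hypothesis n3 : 3 <= n.
Hypothesis cK : is_complex n K.
Variables (F : {set T}) (a0 : T) (c' : seq T).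
Let c := a0 :: c'.
Hypothesis FF : F \in kfaces K (n - 2).
Hypothesis cyc : is_cycle_graph (link n K F) c.

Let m := size c.
Let cc i := nth a0 c i.
Definition nx i := if i.+1 == m then 0 else i.+1.

Let uc : uniq c. Proof. by case: cyc. Qed.
Let m3 : 3 <= m. Proof. by case: cyc. Qed.

Lemma nx_lt i : i < m -> nx i < m.
Proof. rewrite /nx; case: eqP => [_ _|ne lt]; first by apply: leq_trans m3. clear -ne lt; lia. Qed.

Lemma next_cc i : i < m -> next c (cc i) = cc (nx i).
Proof.
move=> im; rewrite next_nth mem_nth // index_uniq //= /nx /cc.
case: eqP => [e|_] //.
by rewrite nth_default //; move: e; rewrite /m /= => -[->].
Qed.

Lemma cc_eq i j : i < m -> j < m -> (cc i == cc j) = (i == j).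
Proof. by move=> im jm; rewrite nth_uniq. Qed.

Lemma linkE u w : link n K F u w = (u \in c) && ((w == next c u) || (u == next c w)).
Proof. by case: cyc => _ _ ->. Qed.

Lemma link_nx i : i < m -> link n K F (cc i) (cc (nx i)).
Proof. by move=> im; rewrite linkE mem_nth // next_cc // eqxx. Qed.

Lemma link_facet u w : link n K F u w ->
  [/\ u != w, u \notin F, w \notin F & F :|: [set u; w] \in kfaces K n].
Proof. by case/and4P. Qed.

Lemma star_le : #|star K n F| <= m.
Proof.
have cF : #|F| = n.-1.
  by move: FF; rewrite inE => /andP [_ /eqP ->]; clear -n3; lia.
have sub : {subset enum (star K n F) <= [seq F :|: [set u; next c u] | u <- c]}.
  move=> A; rewrite mem_enum inE => /andP [AF FA].
  have cA : #|A| = n.+1 by move: AF; rewrite inE => /andP [_ /eqP].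
  have := cardsID F A; rewrite (setIidPr FA) cF cA => h.
  have /cards2P [u [w [uw eD]]] : #|A :\: F| == 2 by apply/eqP; clear -h n3; lia.
  have eA : A = F :|: [set u; w].
    rewrite -eD; apply/setP => x; rewrite !inE.
    by case: (boolP (x \in F)) => xF //=; rewrite (subsetP FA x xF).
  have uF : u \notin F.
    have : u \in A :\: F by rewrite eD !inE eqxx.
    by rewrite inE => /andP [].
  have wF : w \notin F.
    have : w \in A :\: F by rewrite eD !inE eqxx orbT.
    by rewrite inE => /andP [].
  have luw : link n K F u w by rewrite /link uw uF wF -eA.
  have pc : [set w; u] = [set u; w] by rewrite setUC.
  have lwu : link n K F w u by rewrite /link eq_sym uw uF wF pc -eA.
  move: (luw); rewrite linkE => /andP [uc' /orP [/eqP e | /eqP e]].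
    by rewrite eA e; exact: (map_f (fun u => F :|: [set u; next c u]) uc').
  move: (lwu); rewrite linkE => /andP [wc _].
  by rewrite eA -pc e; exact: (map_f (fun u => F :|: [set u; next c u]) wc).
rewrite cardE; apply: leq_trans (uniq_leq_size (enum_uniq _) sub) _.
by rewrite size_map.
Qed.

Lemma nxS i : i.+1 < m -> nx i = i.+1.
Proof. by rewrite /nx => h; case: eqP => // e; move: h; rewrite e ltnn. Qed.

Lemma link_idx u w : link n K F u w -> exists2 k, k < m & w = cc k.
Proof.
move=> l; have : w \in c.
  have [uw uF wF fa] := link_facet l.
  have pc : [set w; u] = [set u; w] by rewrite setUC.
  have l' : link n K F w u by rewrite /link [w == u]eq_sym uw uF wF pc fa.
  by move: l'; rewrite linkE => /andP [].
move=> wc; exists (index w c); first by rewrite index_mem.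
by rewrite /cc nth_index.
Qed.

Lemma nx5 j : m = 5 -> j < 5 ->
  [/\ j != nx (nx j), nx (nx j) != nx j & j != nx (nx (nx j))].
Proof. by rewrite /nx => ->; case: j => [|[|[|[|[|]]]]]. Qed.

Lemma part1_main : 5 <= #|star K n F| -> isometric_in_skel K (link n K F) c ->
  forall lam, 0 < lam -> ~ embeddable K lam.
Proof.
move=> s5 iso lam lam0 [_ [N [phi Hphi]]].
have m5 : 5 <= m by apply: leq_trans s5 star_le.
have cF : #|F| = n.-1.
  by move: FF; rewrite inE => /andP [_ /eqP ->]; clear -n3; lia.
have : 0 < #|F| by rewrite cF; clear -n3; lia.
case/card_gt0P => x1 x1F.
have : 0 < #|F :\ x1| by move: cF; rewrite (cardsD1 x1) x1F; clear -n3; lia.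
case/card_gt0P => x2; rewrite !inE => /andP [x21 x2F].
have facetj j : j < m -> (cc j \notin F) && (F :|: [set cc j; cc (nx j)] \in kfaces K n).
  by move=> jm; have [_ -> _ ->] := link_facet (link_nx jm).
have inK A : A \in kfaces K n -> A \in K by rewrite inE => /andP [].
have d1 u w : skel K u w -> is_dist (skel K) u w 1.
  move=> suw; split; first by exists [:: w]; rewrite /= ?suw ?eqxx.
  case=> [|w' p] //= _ e; move: suw; rewrite e /skel eqxx //.
have H1 u w A : A \in kfaces K n -> u \in A -> w \in A -> u != w ->
    hamming (phi u) (phi w) = lam * 1.
  move=> AF uA wA uw; apply: Hphi.
  - exact: (mem_vertex cK (inK _ AF) uA).
  - exact: (mem_vertex cK (inK _ AF) wA).
  apply: d1; exact: (skel_of cK uw uA wA (inK _ AF)).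
have Hxc x j : x \in F -> j < m -> hamming (phi x) (phi (cc j)) = lam * 1.
  move=> xF jm; have /andP [cF' fF] := facetj j jm.
  apply: (H1 _ _ _ fF); rewrite ?inE ?xF ?eqxx ?orbT //.
  by apply: contraNneq cF' => <-.
have skc j : j < m -> skel K (cc j) x1.
  move=> jm; have /andP [cF' fF] := facetj j jm.
  apply: (skel_of cK _ _ _ (inK _ fF)); rewrite ?inE ?x1F ?eqxx ?orbT //.
  by apply: contraNneq cF' => ->.
have vc j : j < m -> vertex K (cc j).
  move=> jm; have /andP [_ fF] := facetj j jm.
  by apply: (mem_vertex cK (inK _ fF)); rewrite !inE eqxx orbT.
case: (eqVneq m 5) => [em | mn5].
-
  have H2 j k : j < 5 -> k = nx (nx j) -> hamming (phi (cc j)) (phi (cc k)) = lam * 2.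
    move=> j5 ek.
    have jm : j < m by rewrite em.
    have km : k < m by rewrite ek; apply: nx_lt; apply: nx_lt.
    apply: Hphi.
    + exact: vc.
    + exact: vc.
    apply: iso; rewrite ?mem_nth //.
    split.
      exists [:: cc (nx j); cc k]; last by rewrite /= eqxx.
      apply/and3P; split => //; first exact: link_nx.
      by rewrite ek; apply: link_nx; apply: nx_lt.
    have [n1 n2 n3'] := nx5 em j5.
    have nxm : nx j < m by apply: nx_lt.
    case=> [|w [|w' p]] //=.
      by move=> _ e; move: n1; rewrite -ek -(cc_eq jm km) e eqxx.
    move=> /andP [l _] e; subst w; move: l.
    rewrite linkE next_cc // next_cc // (cc_eq km nxm) (cc_eq jm (nx_lt km)).
    by rewrite ek (negbTE n2) (negbTE n3') andbF.
  have m0 : 0 < m by rewrite em. have m1 : 1 < m by rewrite em.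
  have m2 : 2 < m by rewrite em. have m3' : 3 < m by rewrite em.
  have m4 : 4 < m by rewrite em.
  have e02 : 2 = nx (nx 0) by rewrite /nx em.
  have e13 : 3 = nx (nx 1) by rewrite /nx em.
  have e24 : 4 = nx (nx 2) by rewrite /nx em.
  have e30 : 0 = nx (nx 3) by rewrite /nx em.
  have e41 : 1 = nx (nx 4) by rewrite /nx em.
  have := hineq (phi x1) (phi x2) (phi (cc 0)) (phi (cc 1)) (phi (cc 2)) (phi (cc 3)) (phi (cc 4)).
  rewrite (H2 0 2 isT e02) (H2 1 3 isT e13) (H2 2 4 isT e24) (H2 3 0 isT e30) (H2 4 1 isT e41).
  rewrite (Hxc x1 0 x1F m0) (Hxc x1 1 x1F m1) (Hxc x1 2 x1F m2) (Hxc x1 3 x1F m3') (Hxc x1 4 x1F m4).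
  rewrite (Hxc x2 0 x2F m0) (Hxc x2 1 x2F m1) (Hxc x2 2 x2F m2) (Hxc x2 3 x2F m3') (Hxc x2 4 x2F m4).
  have /andP [_ fF] := facetj 0 m0.
  rewrite (H1 x1 x2 _ fF) ?inE ?x1F ?x2F // 1?eq_sym //.
  clear -lam0; lia.
- (* cycles of length >= 6 contradict the apex *)
  have m6 : 6 <= m by clear -m5 mn5; lia.
  have m0 : 0 < m by clear -m6; lia.
  have m3' : 3 < m by clear -m6; lia.
  have m4 : 4 < m by clear -m6; lia.
  have : is_dist (link n K F) (cc 0) (cc 3) 3.
    split.
      exists [:: cc 1; cc 2; cc 3]; last by rewrite /= eqxx.
      have e1 : 1 = nx 0 by rewrite nxS //; clear -m6; lia.
      have e2 : 2 = nx 1 by rewrite nxS //; clear -m6; lia.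
      have e3 : 3 = nx 2 by rewrite nxS //; clear -m6; lia.
      apply/and4P; split => //.
      + by rewrite e1; apply: link_nx.
      + by rewrite e2; apply: link_nx; clear -m6; lia.
      + by rewrite e3; apply: link_nx; clear -m6; lia.
    have n03 : cc 0 != cc 3 by rewrite cc_eq.
    have n31 : cc 3 != cc 1 by rewrite cc_eq //; clear -m6; lia.
    have n04 : cc 0 != cc 4 by rewrite cc_eq.
    have nx0 : nx 0 = 1 by rewrite nxS //; clear -m6; lia.
    have nx3 : nx 3 = 4 by rewrite nxS //; clear -m6; lia.
    case=> [|w [|w' [|w'' p]]] //=.
    + by move=> _ e; move: n03; rewrite e eqxx.
    + move=> /andP [l _] e; subst w; move: l.
      by rewrite linkE !next_cc // nx0 nx3 (negbTE n31) (negbTE n04) andbF.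
    + move=> /and3P [l1 l2 _] e; subst w'.
      have [k km ek] := link_idx l1; subst w.
      move: l1 l2; rewrite !linkE !next_cc // nx0 nx3.
      rewrite !cc_eq //; try (clear -m6; lia); try (apply: nx_lt; done).
      move=> /andP [_ h1] /andP [_ h2]; move: h1 h2; rewrite /nx.
      case: (eqVneq k.+1 m) => e.
        by move=> _ /orP [] /eqP h2 //; clear -e h2 m6; lia.
      by move=> /orP [] /eqP h1 /orP [] /eqP h2; clear -h1 h2; lia.
  move=> /(iso (cc 0) (cc 3) 3 (mem_nth _ m0) (mem_nth _ m3')) [_ h].
  have p1 : path (skel K) (cc 0) [:: x1; cc 3].
    by rewrite /= (skc 0 m0) skelC (skc 3 m3').
  by have := h _ p1 erefl.
Qed.

End Part1.


Theorem theorem4p1 (T : finType) (n : nat) (K : {set {set T}}) :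
  3 <= n -> is_complex n K -> closed_complex n K ->
  (forall F : {set T}, F \in kfaces K (n - 2) -> 5 <= #|star K n F| ->
     (exists c : seq T, is_cycle_graph (link n K F) c /\
                        isometric_in_skel K (link n K F) c) ->
     forall lam : nat, 0 < lam -> ~ embeddable K lam) /\
  (strongly_connected n K -> type34 n K ->
     exists2 lam : nat, 0 < lam & embeddable K lam).
Proof.
move=> n3 cK clK; split.
  move=> F FF s5 [c [cyc iso]] lam lam0.
  case: c cyc iso => [|a0 c'] cyc iso; first by case: cyc.
  exact: (part1_main n3 cK FF cyc s5 iso lam0).
move=> sc t34; exact: (part2 n3 cK clK t34 sc).
Qed.
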